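(* Let $k\geq 2$ be an integer and let $P$ be a finite poset of width $w$ that does not contain $\mathbf{k}+\mathbf{k}$ as an induced subposet. Then the incomparability graph $G$ of $P$ has pathwidth at most $(2k-3)w-1$.
   Context: The width of a poset is the maximum size of an antichain. $\mathbf{k}+\mathbf{k}$ denotes the poset consisting of two disjoint chains $A,B$ with $|A|=|B|=k$ in which every element of $A$ is incomparable with every element of $B$; ''$P$ does not contain $\mathbf{k}+\mathbf{k}$'' means $P$ has no induced subposet isomorphic to it. The incomparability graph of $P$ has the elements of $P$ as vertices, two distinct vertices being adjacent iff they are incomparable in $P$. A path decomposition of a graph $G$ is a sequence $B_1,\dots,B_m$ of vertex subsets such that each vertex lies in a nonempty set of consecutive $B_i$'s and each edge has both endpoints in some $B_i$; its width is $\max_i |B_i|-1$, and the pathwidth of $G$ is the minimum width of a path decomposition of $G$. *)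

(* Defs.v *)
From mathcomp Require Import all_boot all_order.
Set Implicit Arguments. Unset Strict Implicit. Unset Printing Implicit Defensive.
Import Order.Theory.
Local Open Scope order_scope.

Section PosetDefs.
Context {d : Order.disp_t} {T : finPOrderType d}.

Definition antichain (A : {set T}) : bool :=
  [forall x in A, forall y in A, (x != y) ==> (x >< y)].

Definition chain (A : {set T}) : bool :=
  [forall x in A, forall y in A, x >=< y].

Definition width : nat := \max_(A : {set T} | antichain A) #|A|.

Definition contains_kk (k : nat) : Prop :=
  exists A B : {set T}, [/\ chain A, chain B, #|A| = k, #|B| = k &
    forall a b, a \in A -> b \in B -> a >< b].

Definition incomp_adj (x y : T) : bool := (x != y) && (x >< y).

Definition path_decomposition (bags : seq {set T}) : Prop :=
  (forall v : T, exists i j : nat,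
      [/\ i <= j, j < size bags &
        forall t : nat, t < size bags -> (v \in nth set0 bags t) = (i <= t <= j)]%N)
  /\ (forall x y : T, incomp_adj x y ->
        exists2 B, B \in bags & (x \in B) && (y \in B)).

(** Width of a decomposition is max |B_i| - 1; pathwidth <= p iff some path
    decomposition has all bags of size <= p + 1. *)
Definition decomp_width (bags : seq {set T}) : nat :=
  (\max_(B <- bags) #|B|).-1.

End PosetDefs.

(* Main.v *)
Require Import Defs.
From mathcomp Require Import all_boot all_order.
From mathcomp Require Import zify.
From Stdlib Require Import Lia.
Import Order.Theory.
Local Open Scope order_scope.
Set Implicit Arguments. Unset Strict Implicit. Unset Printing Implicit Defensive.

Section Helpers.
Context {d : Order.disp_t} {T : finPOrderType d}.
Implicit Types (A B C S : {set T}) (x y z u : T).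

Lemma chainP A : reflect (forall x y, x \in A -> y \in A -> x >=< y) (chain A).
Proof.
apply: (iffP forallP) => [H x y xA yA | H x].
  by move: (H x); rewrite xA => /forallP /(_ y); rewrite yA.
by apply/implyP => xA; apply/forallP => y; apply/implyP => yA; apply: H.
Qed.

Lemma chainS A B : A \subset B -> chain B -> chain A.
Proof.
move=> /subsetP sAB /chainP H; apply/chainP => x y xA yA; apply: H; exact: sAB.
Qed.

Lemma sub_card_exists A (n : nat) : (n <= #|A|)%N ->
  exists B, B \subset A /\ #|B| = n.
Proof.
elim: n => [|n IH] lt; first by exists set0; rewrite sub0set cards0.
have [B [sBA cB]] := IH (ltnW lt).
have : B \proper A by rewrite properEcard sBA cB lt.
case/properP=> _ [x xA xB].
exists (x |: B); split; first by rewrite subUset sub1set xA sBA.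
by rewrite cardsU1 xB cB.
Qed.

Definition Dset x := [set z | z < x].

Lemma Dset_proper x y : x < y -> Dset x \proper Dset y.
Proof.
move=> lxy; apply/properP; split.
  by apply/subsetP => z; rewrite !inE => lzx; apply: lt_trans lzx lxy.
by exists x; rewrite !inE ?lxy ?ltxx.
Qed.

Lemma chain_top A : chain A -> A != set0 ->
  exists2 t, t \in A & forall a, a \in A -> a <= t.
Proof.
move=> /chainP ch /set0Pn [x0 x0A].
case: (arg_maxnP (fun x => #|Dset x|) x0A) => t tA tmax.
exists t => // a aA.
have := ch a t aA tA; case/orP=> // lta.
case: (eqVneq a t) => [-> //|nat].
have lt: t < a by rewrite lt_neqAle eq_sym nat lta.
have := proper_card (Dset_proper lt); have := tmax a aA.
by move=> h1 h2; move: (leq_ltn_trans h1 h2); rewrite ltnn.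
Qed.

Lemma chain_bot A : chain A -> A != set0 ->
  exists2 t, t \in A & forall a, a \in A -> t <= a.
Proof.
move=> /chainP ch /set0Pn [x0 x0A].
case: (arg_minnP (fun x => #|Dset x|) x0A) => t tA tmin.
exists t => // a aA.
have := ch t a tA aA; case/orP=> // lta.
case: (eqVneq a t) => [-> //|nat].
have lt: a < t by rewrite lt_neqAle nat lta.
have := proper_card (Dset_proper lt); have := tmin a aA.
by move=> h1 h2; move: (leq_ltn_trans h1 h2); rewrite ltnn.
Qed.


Lemma antichain_width A : antichain A -> (#|A| <= width (T:=T))%N.
Proof. by move=> aA; rewrite /width (leq_bigmax_cond A aA). Qed.

Lemma mirsky (h : nat) S : (forall A, A \subset S -> chain A -> (#|A| <= h)%N) ->
  (#|S| <= h * width (T:=T))%N.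
Proof.
elim: h S => [|h IH] S H.
  case: (set_0Vmem S) => [-> | [x xS]]; first by rewrite cards0.
  have := H [set x]; rewrite sub1set xS cards1 => /(_ isT).
  suff ch : chain [set x] by move/(_ ch).
  by apply/chainP => a b; rewrite !inE => /eqP -> /eqP ->; rewrite comparablexx.
pose M := [set x in S | [forall y in S, ~~ (x < y)]].
rewrite -(cardsID M S) mulSn.
have sMS : M \subset S by apply/subsetP => x; rewrite inE => /andP [].
rewrite (setIidPr sMS); apply: leq_add.
  apply: antichain_width; apply/forallP => x; apply/implyP => xM.
  apply/forallP => y; apply/implyP => yM; apply/implyP => nxy.
  move: xM yM; rewrite !inE => /andP [xS /forallP Hx] /andP [yS /forallP Hy].
  have := Hx y; rewrite yS /= => nlxy; have := Hy x; rewrite xS /= => nlyx.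
  rewrite /Order.comparable negb_or !le_eqVlt (negbTE nlxy) (negbTE nlyx).
  by rewrite !orbF nxy eq_sym nxy.
apply: IH => A sA chA.
case: (eqVneq A set0) => [-> | nA]; first by rewrite cards0.
have [t tA ttop] := chain_top chA nA.
have := subsetP sA t tA; rewrite !inE => /andP [/negP tM tS].
have [y yS lty] : exists2 y, y \in S & t < y.
  have : ~~ [forall y in S, ~~ (t < y)].
    by apply/negP => Hf; apply: tM; rewrite ?inE tS Hf.
  by case/forall_inPn => y yS /negPn lty; exists y.
have yA : y \notin A.
  by apply/negP => yA; have := le_lt_trans (ttop y yA) lty; rewrite ltxx.
have := H (y |: A).
rewrite cardsU1 yA add1n ltnS; apply.
  rewrite subUset sub1set yS /=; apply: subset_trans sA _; exact: subsetDl.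
apply/chainP => a b; rewrite !inE => /orP [/eqP -> | aA] /orP [/eqP -> | bA].
- exact: comparablexx.
- by apply/orP; right; apply: le_trans (ttop b bA) (ltW lty).
- by apply/orP; left; apply: le_trans (ttop a aA) (ltW lty).
- by move/chainP: chA; apply.
Qed.

Lemma incP x y : reflect (~~ (x <= y) /\ ~~ (y <= x)) (x >< y).
Proof. by rewrite /Order.comparable negb_or; apply: andP. Qed.

Definition Nset (k : nat) x := [set z | [exists A : {set T}, [&& chain A,
  (k <= #|A|)%N, z \in A, x \in A & [forall a in A, (z <= a) && (a <= x)]]]].

Lemma NsetP k x z : reflect (exists A, [/\ chain A, (k <= #|A|)%N, z \in A,
  x \in A & forall a, a \in A -> (z <= a) && (a <= x)]) (z \in Nset k x).
Proof.
rewrite inE; apply: (iffP existsP) => [[A /and5P [h1 h2 h3 h4 /forall_inP h5]] | [A [h1 h2 h3 h4 h5]]].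
  by exists A; split.
by exists A; rewrite h1 h2 h3 h4; apply/forall_inP.
Qed.

Lemma Nset_lt k x z : (2 <= k)%N -> z \in Nset k x -> z < x.
Proof.
move=> k2 /NsetP [A [_ cA zA xA H]].
rewrite lt_neqAle; have /andP [-> _] := H x xA; rewrite andbT.
apply/eqP => ezx; subst x.
have : A \subset [set z].
  apply/subsetP => a aA; rewrite inE; have /andP [h1 h2] := H a aA.
  by rewrite eq_le h1 h2.
move/subset_leq_card; rewrite cards1 => h.
by have := leq_trans k2 (leq_trans cA h).
Qed.

Lemma Nset_mono k x y : x < y -> Nset k x \subset Nset k y.
Proof.
move=> lxy; apply/subsetP => z /NsetP [A [chA cA zA xA H]].
apply/NsetP; exists (y |: A); split.
- apply/chainP => a b; rewrite !inE => /orP [/eqP -> | aA] /orP [/eqP -> | bA].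
  + exact: comparablexx.
  + have /andP [_ h] := H b bA.
    by apply/orP; right; apply: le_trans h (ltW lxy).
  + have /andP [_ h] := H a aA.
    by apply/orP; left; apply: le_trans h (ltW lxy).
  + by move/chainP: chA; apply.
- by apply: leq_trans cA _; apply: subset_leq_card; apply: subsetUr.
- by rewrite !inE zA orbT.
- by rewrite !inE eqxx.
- move=> a; rewrite !inE => /orP [/eqP -> | aA].
    have /andP [h _] := H x xA.
    by rewrite lexx andbT; apply: le_trans h (ltW lxy).
  have /andP [h1 h2] := H a aA.
  by rewrite h1 /=; apply: le_trans h2 (ltW lxy).
Qed.

Lemma key_lemma k u c b C : (2 <= k)%N -> ~ contains_kk (T:=T) k -> chain C ->
  (2 * k - 2 <= #|C|)%N -> b \in C -> c \in C ->
  (forall a, a \in C -> (b <= a) && (a <= c)) ->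
  (forall a, a \in C -> u >< a) -> (#|Nset k u| < #|Nset k c|)%N.
Proof.
move=> k2 nkk chC cC bC cCc Hbc Hu.
apply: proper_card; apply/properP; split; last first.
  exists b.
    apply/NsetP; exists C; split => //.
    by apply: leq_trans cC; lia.
  apply/negP => /(Nset_lt k2) lbu.
  by have /incP [_ h] := Hu b bC; move/negP: h; apply; apply: ltW.
apply/subsetP => z zN.
have lzu := Nset_lt k2 zN.
case/NsetP: zN => Z [chZ cZ zZ uZ HZ].
pose B := [set a | z < a].
have cardC := cardsID B C.
have small : (#|C :\: B| < k)%N.
  rewrite ltnNge; apply/negP => big.
  have [Z' [sZ' cZ']] := sub_card_exists cZ.
  have [C' [sC' cC']] := sub_card_exists big.
  apply: nkk; exists Z', C'; split => //.
  - exact: chainS sZ' chZ.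
  - apply: chainS sC' _; apply: chainS chC; exact: subsetDl.
  move=> x y /(subsetP sZ') xZ /(subsetP sC'); rewrite !inE => /andP [nzy yC].
  have /andP [hzx hxu] := HZ x xZ.
  have /incP [nuy nyu] := Hu y yC.
  apply/incP; split; apply/negP => h.
  - have hzy : z <= y by apply: le_trans hzx h.
    case: (eqVneq z y) => [ezy | nezy].
      by subst y; move/negP: nyu; apply; apply: ltW.
    by move/negP: nzy; apply; rewrite lt_neqAle nezy hzy.
  - by move/negP: nyu; apply; apply: le_trans h hxu.
have bigB : (k - 1 <= #|C :&: B|)%N.
  move: cC small; rewrite -cardC; move: (#|C :&: B|) (#|C :\: B|) => p q.
  move=> h1 h2; lia.
have [a0 a0C] : exists a0, a0 \in C :&: B.
  apply/set0Pn; rewrite -card_gt0; apply: leq_trans bigB.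
  lia.
have lza0 : z < a0 by move: a0C => /setIP [_]; rewrite inE.
have {}a0C : a0 \in C by case/setIP: a0C.
have /andP [_ la0c] := Hbc a0 a0C.
have lzc : z < c by apply: lt_le_trans lza0 la0c.
have bigB' : (k <= #|C :&: B|.+1)%N by lia.
apply/NsetP; exists (z |: (C :&: B)); split.
- apply/chainP => x y; rewrite !inE => /orP [/eqP -> | /andP [xC lzx]] /orP [/eqP -> | /andP [yC lzy]].
  + exact: comparablexx.
  + by apply/orP; left; apply: ltW.
  + by apply/orP; right; apply: ltW.
  + by move/chainP: chC; apply.
- rewrite cardsU1 !inE ltxx andbF /= add1n.
  exact: bigB'.
- by rewrite !inE eqxx.
- by rewrite !inE cCc lzc orbT.
- move=> x; rewrite !inE => /orP [/eqP -> | /andP [xC lzx]].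
    by rewrite lexx (ltW lzc).
  by rewrite (ltW lzx); have /andP [_ ->] := Hbc x xC.
Qed.

Lemma inc_sym x y : x >< y -> y >< x.
Proof. by move/incP => [h1 h2]; apply/incP; split. Qed.

Definition K k x := (#|Nset k x| * #|T|.+1 + #|Dset x|)%N.

Lemma K_mono k x y : x < y -> (K k x < K k y)%N.
Proof.
move=> lxy; have h1 := subset_leq_card (Nset_mono k lxy).
have h2 := proper_card (Dset_proper lxy).
rewrite /K; apply: leq_ltn_trans (leq_add (leq_mul h1 (leqnn _)) (leqnn _)) _.
by rewrite ltn_add2l.
Qed.

Lemma K_key k x y : (#|Nset k x| < #|Nset k y|)%N -> (K k x < K k y)%N.
Proof.
move=> h; have hd := max_card (mem (Dset x)).
rewrite /K; apply: (@leq_trans (#|Nset k x|.+1 * #|T|.+1)).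
  by rewrite mulSn addnC ltn_add2r ltnS.
by apply: leq_trans (leq_addr _ _); rewrite leq_mul2r h orbT.
Qed.

Definition Iset x := [set u | (u == x) || (x >< u)].
Definition lastp k x := (\max_(u in Iset x) K k u)%N.

Lemma K_le_last k x u : u \in Iset x -> (K k u <= lastp k x)%N.
Proof. by move=> h; rewrite /lastp (leq_bigmax_cond u h). Qed.

Lemma Iset_self x : x \in Iset x. Proof. by rewrite inE eqxx. Qed.

Lemma last_att k x : exists2 u, u \in Iset x & lastp k x = K k u.
Proof.
have : (0 < #|Iset x|)%N by rewrite card_gt0; apply/set0Pn; exists x; exact: Iset_self.
by case/(eq_bigmax_cond (K k)) => u uI e; exists u.
Qed.

Definition bag k t := [set v | (K k v <= t <= lastp k v)%N].
Definition Smax k := (\max_(u : T) K k u).+1.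
Definition bags k := [seq bag k t | t <- iota 0 (Smax k)].

Lemma bags_pd k : path_decomposition (bags k).
Proof.
split.
  move=> v; exists (K k v), (lastp k v); split.
  - exact: K_le_last (Iset_self v).
  - rewrite size_map size_iota /Smax ltnS.
    by have [u _ ->] := last_att k v; apply: leq_bigmax.
  - move=> t; rewrite size_map size_iota => ht.
    by rewrite (nth_map 0%N) ?size_iota // nth_iota // add0n inE.
move=> x y /andP [_ ixy].
have inb t : (t < Smax k)%N -> bag k t \in bags k.
  by move=> ht; apply: map_f; rewrite mem_iota add0n.
have lem a b : a >< b -> (K k a <= K k b)%N -> exists2 B, B \in bags k & (a \in B) && (b \in B).
  move=> iab hab; exists (bag k (K k b)).
    by apply: inb; rewrite /Smax ltnS; apply: leq_bigmax.
  rewrite !inE hab leqnn /= (K_le_last _ (Iset_self b)) /=.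
  by rewrite andbT; apply: K_le_last; rewrite inE iab orbT.
case: (leqP (K k x) (K k y)) => h; first exact: lem.
have [B HB /andP [h1 h2]] := lem y x (inc_sym ixy) (ltnW h).
by exists B => //; rewrite h1 h2.
Qed.

Lemma bag_chain k t A : (2 <= k)%N -> ~ contains_kk (T:=T) k ->
  A \subset bag k t -> chain A -> (#|A| <= 2 * k - 3)%N.
Proof.
move=> k2 nkk sA chA; rewrite leqNgt; apply/negP => big.
have nA : A != set0 by rewrite -card_gt0; apply: leq_trans big; lia.
have [c cA ctop] := chain_top chA nA.
have [b bA bbot] := chain_bot chA nA.
have lbc : b < c.
  rewrite lt_neqAle (bbot c cA) andbT; apply/eqP => ebc; subst c.
  have : A \subset [set b].
    by apply/subsetP => a aA; rewrite inE eq_le bbot // ctop.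
  move/subset_leq_card; rewrite cards1 => h; lia.
have Kbc := K_mono k lbc.
have := subsetP sA b bA; rewrite inE => /andP [_ hbt].
have := subsetP sA c cA; rewrite inE => /andP [hct _].
have [u uI eu] := last_att k b.
have Kcu : (K k c <= K k u)%N by rewrite -eu; apply: leq_trans hct hbt.
move: uI; rewrite inE => /orP [/eqP eub | ibu].
  by subst u; move: (leq_trans Kbc Kcu); rewrite ltnn.
have Hu : forall a, a \in A -> u >< a.
  move=> a aA; have hba := bbot a aA; have hac := ctop a aA.
  have /incP [nbu nub] := ibu.
  apply/incP; split; apply/negP => h.
  - have huc : u <= c by apply: le_trans h hac.
    case: (eqVneq u c) => [euc | nuc].
      by subst u; move/negP: nbu; apply; apply: ltW.
    have : u < c by rewrite lt_neqAle nuc huc.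
    by move/(K_mono k) => h'; move: (leq_trans h' Kcu); rewrite ltnn.
  - by move/negP: nbu; apply; apply: le_trans hba h.
have := key_lemma k2 nkk chA _ bA cA _ Hu.
have hbc : forall a, a \in A -> (b <= a) && (a <= c) by move=> a aA; rewrite bbot ?ctop.
have hcard : (2 * k - 2 <= #|A|)%N by lia.
move=> /(_ hcard hbc) /K_key h'.
by move: (leq_trans h' Kcu); rewrite ltnn.
Qed.

End Helpers.

Theorem corollary2 (d : Order.disp_t) (T : finPOrderType d) (k : nat) :
  (2 <= k)%N -> ~ contains_kk (T := T) k ->
  exists bags : seq {set T},
    path_decomposition bags /\
    (forall B, B \in bags -> #|B| <= (2 * k - 3) * width (T := T))%N.
Proof.
move=> k2 nkk; exists (bags k); split; first exact: bags_pd.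
move=> B /mapP [t _ ->]; apply: mirsky => A sA chA.
exact: bag_chain k2 nkk sA chA.
Qed.
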